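(* Let $k\ge1$ and let $G$ be a finite $k$-connected graph with $|V_G|\ge k+1$. Then $k\le \mathrm{Ent}(G)\le \mathrm{Cycl}(G)$.
   Context: Graphs are finite and undirected. A graph is $k$-connected if one must remove at least $k$ vertices to disconnect it (by convention $K_m$, $m\ge3$, has connectivity $m-1$). $\mathrm{Cycl}(G)$ (cyclicity) is the minimum size of a feedback vertex set of the symmetric digraph of $G$ (each edge $uv$ viewed as the two arcs $(u,v),(v,u)$, so each edge forms a directed 2-cycle); equivalently the minimum size of an edge cover set, i.e. a set of vertices containing an endpoint of every edge. Entanglement: in the game $\mathrm{Ent}(G,k)$ Thief plays against $k$ cops. Initially no cop is placed and Thief picks a vertex. Each round, Cops may do nothing, place a new cop (at most $k$ in total) on Thief's current vertex, or move a placed cop to Thief's current vertex; then Thief must move along an edge to an adjacent vertex not occupied by a cop, and is caught (Cops win) if he cannot. Infinite plays are won by Thief. $\mathrm{Ent}(G)$ is the least $k$ for which Cops have a winning strategy. *)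

(* Defs.v *)
From mathcomp Require Import all_boot.
Set Implicit Arguments. Unset Strict Implicit. Unset Printing Implicit Defensive.

Definition simple_graph (T : finType) (e : rel T) : Prop :=
  symmetric e /\ irreflexive e.

Definition restr_rel (T : finType) (e : rel T) (S : {set T}) : rel T :=
  [rel x y | [&& e x y, x \notin S & y \notin S]].

(* G is k-connected: |V| > k and removing fewer than k vertices leaves a
   connected graph (so K_m has connectivity m-1). *)
Definition k_connected (T : finType) (e : rel T) (k : nat) : Prop :=
  k < #|T| /\
  forall S : {set T}, #|S| < k ->
    forall x y, x \notin S -> y \notin S -> connect (restr_rel e S) x y.

(* Cyclicity: minimum size of an edge cover set (vertex cover). *)
Definition edge_cover (T : finType) (e : rel T) (S : {set T}) : bool :=
  [forall x, forall y, e x y ==> (x \in S) || (y \in S)].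

Lemma cycl_ex (T : finType) (e : rel T) :
  exists n, [exists S : {set T}, edge_cover e S && (#|S| == n)].
Proof.
exists #|[set: T]|; apply/existsP; exists [set: T]; rewrite eqxx andbT.
apply/forallP => x; apply/forallP => y; apply/implyP => _; by rewrite in_setT.
Qed.

Definition Cycl (T : finType) (e : rel T) : nat := ex_minn (cycl_ex e).

(* Cops are indexed by 'I_k; a cop
   configuration maps each cop to its vertex (None = not yet placed).
   A Cops move is None (do nothing) or Some i: put cop i on Thief's current
   vertex (placing it if it was not placed yet, moving it otherwise).
   A Cops strategy maps the history of Thief positions t_0 ... t_n
   (the current one last) to a move. *)
Definition cop_conf (T : finType) (k : nat) := {ffun 'I_k -> option T}.
Definition cop_strategy (T : finType) (k : nat) := seq T -> option 'I_k.

Definition apply_move (T : finType) (k : nat) (c : cop_conf T k)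
    (m : option 'I_k) (v : T) : cop_conf T k :=
  if m is Some i then [ffun j => if j == i then Some v else c j] else c.

(* conf sigma t n = configuration of the cops before Cops' move in round n,
   for the sequence t of Thief positions. *)
Fixpoint conf (T : finType) (k : nat) (sigma : cop_strategy T k)
    (t : nat -> T) (n : nat) : cop_conf T k :=
  match n with
  | 0 => [ffun => None]
  | n'.+1 => apply_move (conf sigma t n') (sigma (mkseq t n'.+1)) (t n')
  end.

(* An infinite play consistent with sigma, i.e. one won by Thief: in every
   round Thief moves along an edge to a vertex not occupied by a cop
   (after Cops' move of that round). *)
Definition thief_escapes (T : finType) (e : rel T) (k : nat)
    (sigma : cop_strategy T k) (t : nat -> T) : Prop :=
  forall n, e (t n) (t n.+1) /\
            forall i : 'I_k, conf sigma t n.+1 i != Some (t n.+1).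

(* Cops have a winning strategy in Ent(G,k): one strategy such that, whatever
   the initial vertex and the Thief moves, no infinite play arises (every play
   ends with Thief unable to move, i.e. caught). *)
Definition cops_win (T : finType) (e : rel T) (k : nat) : Prop :=
  exists sigma : cop_strategy T k, forall t : nat -> T, ~ thief_escapes e sigma t.

(* Main.v *)
Require Import Defs.
From mathcomp Require Import all_boot.
From mathcomp Require Import zify.
Set Implicit Arguments. Unset Strict Implicit. Unset Printing Implicit Defensive.

Lemma conf_ext (T : finType) (k : nat) (sigma : cop_strategy T k) t t' n :
  (forall i, i < n -> t i = t' i) -> conf sigma t n = conf sigma t' n.
Proof.
elim: n => [//|n IH] H /=.
rewrite IH; last by move=> i Hi; apply: H; exact: leqW.
have -> : mkseq t n.+1 = mkseq t' n.+1.
  rewrite /mkseq; apply/eq_in_map => i; rewrite mem_iota add0n => /andP[_ Hi].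
  exact: H.
by rewrite (H n (ltnSn n)).
Qed.

Lemma free_nbr (T : finType) (e : rel T) (k m : nat) :
  irreflexive e -> k_connected e k -> m < k ->
  forall (c : cop_conf T m) v, exists y, e v y && [forall i, c i != Some y].
Proof.
move=> irr [HkT Hcon] Hmk c v.
pose O := [set y | [exists i, c i == Some y]].
have HO : #|O| <= m.
  pose f := fun i : 'I_m => odflt v (c i).
  have sub : O \subset f @: [set: 'I_m].
    apply/subsetP => y; rewrite inE => /existsP[i /eqP Hi].
    by apply/imsetP; exists i; rewrite ?inE // /f Hi.
  apply: leq_trans (subset_leq_card sub) _.
  by apply: leq_trans (leq_imset_card _ _) _; rewrite cardsT card_ord.
pose S := O :\ v.
have HS : #|S| < k by apply: leq_ltn_trans (subset_leq_card (subsetDl O [set v])) _; apply: leq_ltn_trans HO Hmk.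
have [y Hy] : exists y, y \in ~: (v |: S).
  case: (pickP (mem (~: (v |: S)))) => [y Hy|H]; first by exists y.
  have := cardsC (v |: S); rewrite (eq_card0 H) addn0 => Hc.
  have := cardsU1 v S; rewrite Hc => Hc2.
  have : #|T| <= k by rewrite Hc2; apply: leq_trans HS; rewrite -add1n leq_add2r; case: (v \notin S).
  by rewrite leqNgt HkT.
move: Hy; rewrite in_setC in_setU1 negb_or => /andP[Hyv HyS].
have Hvs : v \notin S by rewrite !inE eqxx.
have /connectP [p Hp Hl] := Hcon S HS v y Hvs HyS.
case: p Hp Hl => [|x1 p] /=; first by move=> _ Hyv'; rewrite Hyv' eqxx in Hyv.
move=> /andP[/andP[Hex /andP[_ Hx1S]] _] _.
exists x1; rewrite Hex /=; apply/forallP => i; apply/negP => /eqP Hci.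
move: Hx1S; rewrite !inE negb_and negbK => /orP[/eqP Hxv|].
  by rewrite Hxv irr in Hex.
by move/negP; apply; apply/existsP; exists i; rewrite Hci.
Qed.

Lemma thief_wins (T : finType) (e : rel T) (k m : nat) (sigma : cop_strategy T m) :
  irreflexive e -> k_connected e k -> m < k ->
  exists t, thief_escapes e sigma t.
Proof.
move=> irr Hkc Hmk.
have /card_gt0P [x0 _] : 0 < #|T| by case: Hkc => H _; apply: leq_ltn_trans H.
pose step (s : seq T) : T :=
  odflt x0 [pick y | e (last x0 s) y &&
     [forall i, conf sigma (fun j => nth x0 s j) (size s) i != Some y]].
pose hist := fix hist n := if n is n'.+1 then rcons (hist n') (step (hist n')) else [:: x0].
have Hsz : forall n, size (hist n) = n.+1 by elim=> [//|n IH] /=; rewrite size_rcons IH.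
pose t n := nth x0 (hist n) n.
have Hnth : forall n i, i <= n -> nth x0 (hist n) i = t i.
  elim=> [|n IH] i Hi; first by case: i Hi.
  rewrite leq_eqVlt in Hi; case/orP: Hi => [/eqP -> //|Hi].
  by rewrite /= nth_rcons Hsz Hi IH.
exists t => n.
have Ht1 : t n.+1 = step (hist n) by rewrite /t /= nth_rcons Hsz ltnn eqxx.
have Hc : conf sigma (fun j => nth x0 (hist n) j) (size (hist n)) = conf sigma t n.+1.
  by rewrite Hsz; apply: conf_ext => i Hi; apply: Hnth.
have Hlast : last x0 (hist n) = t n by rewrite -nth_last Hsz /= Hnth.
move: Ht1; rewrite /step Hc Hlast.
case: pickP => [y /andP[Hey /forallP Hf] /= ->|H]; first by split=> // i; apply: Hf.
have [y Hy] := free_nbr irr Hkc Hmk (conf sigma t n.+1) (t n).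
by rewrite H in Hy.
Qed.

Lemma cover_wins (T : finType) (e : rel T) (S : {set T}) :
  edge_cover e S -> cops_win e #|S|.
Proof.
move=> HS.
pose idx v := index v (enum S).
pose sigma : cop_strategy T #|S| :=
  fun h => if h is x :: h' then insub (idx (last x h')) else None.
exists sigma => t esc.
have Hsig : forall n, sigma (mkseq t n.+1) = insub (idx (t n)).
  move=> n; rewrite /sigma.
  have : last (t 0) (mkseq t n.+1) = t n by rewrite -nth_last size_mkseq nth_mkseq.
  by rewrite /mkseq /= => ->.
clearbody sigma.
have inv : forall n j (i : 'I_#|S|), j < n -> val i = idx (t j) -> conf sigma t n i = Some (t j).
  elim=> [//|n IH] j i Hj Hi /=.
  rewrite Hsig; case: insubP => [i0 Hi0 Hv|Hno] /=.
  - rewrite ffunE; case: eqP => [Heq|Hne].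
    + move: (ltn_ord i); rewrite Hi /idx cardE index_mem mem_enum => Hjs.
      move: Hi0; rewrite /idx cardE index_mem mem_enum => Hns.
      have Hidx : idx (t j) = idx (t n) by rewrite -Hi -Hv Heq.
      have E1 : nth (t j) (enum S) (idx (t n)) = t n by rewrite nth_index ?mem_enum.
      have E2 : nth (t j) (enum S) (idx (t j)) = t j by rewrite nth_index ?mem_enum.
      by rewrite -E1 -Hidx E2.
    + rewrite ltnS leq_eqVlt in Hj; case/orP: Hj => [/eqP Hjn|Hj]; last exact: IH.
      by exfalso; apply: Hne; apply: val_inj; rewrite Hi Hv Hjn.
  - rewrite ltnS leq_eqVlt in Hj; case/orP: Hj => [/eqP Hjn|Hj]; last exact: IH.
    by move: Hno; rewrite -Hjn -Hi ltn_ord.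
have Hcov : forall n, (t n \in S) || (t n.+1 \in S).
  move=> n; have [He _] := esc n.
  by move: HS => /forallP/(_ (t n))/forallP/(_ (t n.+1))/implyP/(_ He).
pose p i := if t (2 * i) \in S then 2 * i else (2 * i).+1.
have HpS : forall i, t (p i) \in S.
  by move=> i; rewrite /p; case: ifP => // /negbT H; move: (Hcov (2 * i)); rewrite (negbTE H).
have Hp1 : forall i, 2 * i <= p i <= (2 * i).+1 by move=> i; rewrite /p; case: ifP => _; rewrite ?leqnn ?leqnSn.
have key : forall a b, a < b -> t (p a) = t (p b) -> False.
  move=> a b Hab Heq.
  have Hlt : p a < p b.
    case/andP: (Hp1 a) => _ H1; case/andP: (Hp1 b) => H2 _.
    apply: leq_ltn_trans H1 _; apply: leq_trans H2.
    lia.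
  have Hsz : idx (t (p a)) < #|S| by rewrite /idx cardE index_mem mem_enum.
  have Hc := inv (p b) (p a) (Ordinal Hsz) Hlt erefl.
  have Hpb : p b = (p b).-1.+1 by rewrite prednK //; apply: leq_ltn_trans Hlt.
  have [_ Hf] := esc (p b).-1.
  by move: (Hf (Ordinal Hsz)); rewrite -Hpb Hc Heq eqxx.
pose f := fun i : 'I_#|T|.+1 => t (p i).
have /existsP[i /existsP[i' /andP[Hne /eqP Heq]]] : [exists i, exists i', (i != i') && (f i == f i')].
  apply: contraT => /negP H.
  have inj : injective f.
    move=> x y Hxy; apply/eqP; apply: contraT => Hn; exfalso; apply: H.
    by apply/existsP; exists x; apply/existsP; exists y; rewrite Hn Hxy eqxx.
  by have := @leq_card _ _ f inj; rewrite card_ord ltnn.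
rewrite /f in Heq.
case: (ltngtP i i') => [H|H|H].
- exact: key H Heq.
- exact: key H (esym Heq).
- by move: Hne; rewrite (val_inj H) eqxx.
Qed.

Theorem mainTheorem7 (T : finType) (e : rel T) (k : nat) :
  simple_graph e -> 1 <= k -> k_connected e k -> k.+1 <= #|T| ->
  (forall m, cops_win e m -> k <= m) /\
  (exists m, m <= Cycl e /\ cops_win e m).
Proof.
move=> [_ irr] _ Hkc _; split.
  move=> m [sigma Hs]; rewrite leqNgt; apply/negP => Hmk.
  have [t Ht] := thief_wins sigma irr Hkc Hmk.
  exact: Hs Ht.
rewrite /Cycl; case: (ex_minnP (cycl_ex e)) => m /existsP[S /andP[HS /eqP HSm]] _.
by exists m; split=> //; rewrite -HSm; apply: cover_wins.
Qed.
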